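(* Let $\Sigma$ be a finite alphabet. The function $d_2:\Sigma^*\times\Sigma^*\to\mathbb{Z}_{\ge0}$, $d_2(u,v)=H(\underline{u},\underline{v})+\lceil |l(u)-l(v)|/2\rceil$, is an integer-valued metric on $\Sigma^*$, and it is Hamming compatible.
   Context: $\Sigma_n$ is the set of words of length $n$ over $\Sigma$, $\Sigma^*$ the set of all finite words, $l(u)$ the length of $u$. $H$ is the Hamming distance between equal-length words. Truncated Hamming function: if $l(u)\ge l(v)$, $\underline{u}$ is the prefix of $u$ of length $l(v)$ and $\underline{v}=v$ (symmetrically otherwise), and $H(\underline{u},\underline{v})$ is the Hamming distance between these equal-length words. A metric $\delta$ on $\Sigma^*$ is Hamming compatible if $\delta(u,v)=H(u,v)$ whenever $l(u)=l(v)$. *)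

(* Defs.v *)
From mathcomp Require Import all_boot.
Set Implicit Arguments. Unset Strict Implicit. Unset Printing Implicit Defensive.

(* Words over alphabet S are sequences [seq S]; l(u) = size u. *)

(* Hamming distance: number of positions where u and v differ
   (meaningful for equal-length words; it compares the first
   min(size u, size v) letters). *)
Definition hamming (S : eqType) (u v : seq S) : nat :=
  count (fun p => p.1 != p.2) (zip u v).

Definition trunc_hamming (S : eqType) (u v : seq S) : nat :=
  let m := minn (size u) (size v) in hamming (take m u) (take m v).

Definition absdiff (a b : nat) : nat := maxn a b - minn a b.

Definition ceil_half (n : nat) : nat := n.+1./2.

Definition d2 (S : eqType) (u v : seq S) : nat :=
  trunc_hamming u v + ceil_half (absdiff (size u) (size v)).

Definition is_metric (S : eqType) (d : seq S -> seq S -> nat) : Prop :=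
  (forall u v, d u v = 0 <-> u = v) /\
  (forall u v, d u v = d v u) /\
  (forall u v w, d u w <= d u v + d v w).

Definition hamming_compatible (S : eqType) (d : seq S -> seq S -> nat) : Prop :=
  forall u v, size u = size v -> d u v = hamming u v.

(* Main.v *)
Require Import Defs.
From mathcomp Require Import all_boot.
From mathcomp Require Import zify.

Section S.
Variable S : eqType.

Lemma ham_cons (x y : S) u v : hamming (x :: u) (y :: v) = (x != y) + hamming u v.
Proof. by []. Qed.

Lemma ham_nil_l (v : seq S) : hamming [::] v = 0.
Proof. by case: v. Qed.
Lemma ham_nil_r (v : seq S) : hamming v [::] = 0.
Proof. by case: v. Qed.

Lemma th_ham (u v : seq S) : trunc_hamming u v = hamming u v.
Proof.
rewrite /trunc_hamming.
elim: u v => [|x u IH] [|y v] //=; rewrite ?take0 ?ham_nil_l ?ham_nil_r //.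
by rewrite minnSS /= ham_cons IH.
Qed.

Lemma ham_sym (u v : seq S) : hamming u v = hamming v u.
Proof.
elim: u v => [|x u IH] [|y v] //; rewrite ?ham_nil_l ?ham_nil_r //.
by rewrite !ham_cons IH eq_sym.
Qed.

Lemma ham_le (u v : seq S) : hamming u v <= minn (size u) (size v).
Proof. by rewrite /hamming -size_zip count_size. Qed.

Lemma ch (n : nat) : ceil_half n = n.+1 %/ 2.
Proof. by rewrite /ceil_half -divn2. Qed.

Lemma tri (u v w : seq S) :
  hamming u w + ceil_half (absdiff (size u) (size w)) <=
  hamming u v + ceil_half (absdiff (size u) (size v)) +
  (hamming v w + ceil_half (absdiff (size v) (size w))).
Proof.
rewrite !ch /absdiff.
elim: u v w => [|x u IH] [|y v] [|z w] /=;
  rewrite ?ham_nil_l ?ham_nil_r ?ham_cons; try lia.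
- have := ham_le u w; have : (x != z) <= 1 by case: (x != z).
  move=> /= h1 h2; lia.
- rewrite !maxnSS !minnSS !subSS.
  have := IH v w. have : (x != z) <= (x != y) + (y != z).
    by case: (x =P y); case: (y =P z); case: (x =P z) => //= *; subst; congruence.
  move: (x != z) (x != y) (y != z) => b1 b2 b3 /=.
  set A := _ %/ 2; set B := _ %/ 2; set C := _ %/ 2.
  lia.
Qed.

End S.

Theorem proposition2p4 (Sigma : finType) :
  is_metric (@d2 Sigma) /\ hamming_compatible (@d2 Sigma).
Proof.
split; [split; [|split]|].
- move=> u v; split; last by move=> ->; rewrite /d2 th_ham /absdiff ch;
    elim: v => //= x v; rewrite ham_cons eqxx /=; lia.
  rewrite /d2 th_ham ch /absdiff => H.
  have Hs : size u = size v by lia.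
  have H0 : hamming u v = 0 by lia.
  elim: u v Hs H0 {H} => [|x u IH] [|y v] //= [Hs]; rewrite ham_cons.
  case: (x =P y) => [->|] //= H; by rewrite (IH v).
- move=> u v; rewrite /d2 !th_ham ham_sym /absdiff maxnC minnC //.
- move=> u v w; rewrite /d2 !th_ham; exact: tri.
- move=> u v Hs; rewrite /d2 th_ham /absdiff ch Hs maxnn minnn subnn; lia.
Qed.
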